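(* Let $p$ be a prime and $G$ a finite $p$-group with $|G'\cap Z(G)|=p$ and $|G'|=p^2$. Then $Z(G)^*\cap Z(C_G(G'))=G'Z(G)$.
   Context: $G'$ is the commutator subgroup, $Z(\cdot)$ the center, $C_G(G')$ the centralizer of $G'$ in $G$. Commutators are $[x,y]=xyx^{-1}y^{-1}$; for $x\in G$, $[G,x]=\{[y,x]: y\in G\}$; and $Z(G)^*=\{x\in G : [G,x]\subseteq Z(G)\}$. *)

(* Defs.v *)
From mathcomp Require Import all_boot all_fingroup all_solvable.
Set Implicit Arguments. Unset Strict Implicit. Unset Printing Implicit Defensive.
Local Open Scope group_scope.

(* Paper's commutator convention: [x,y] = x y x^-1 y^-1. *)
Definition pcomm (gT : finGroupType) (x y : gT) : gT := x * y * x^-1 * y^-1.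

Definition Zstar (gT : finGroupType) (G : {set gT}) : {set gT} :=
  [set x in G | [forall y in G, pcomm y x \in 'Z(G)]].

(* Main.v *)
Require Import Defs.
From mathcomp Require Import all_boot all_fingroup all_solvable.
Local Open Scope group_scope.

Section Aux.
Variable gT : finGroupType.

Lemma pgrp_sub_card p n (H D : {group gT}) : prime p -> #|D| = (p ^ n)%N ->
  H \subset D -> exists2 m, m <= n & #|H| = (p ^ m)%N.
Proof.
move=> pr cD sHD; have := cardSg sHD; rewrite cD.
by case/(dvdn_pfactor _ _ pr) => m lemn ->; exists m.
Qed.

Lemma card_between p (N H D : {group gT}) : prime p -> #|N| = p -> #|D| = (p ^ 2)%N ->
  N \subset H -> H \subset D -> ~~ (H \subset N) -> H :=: D.
Proof.
move=> pr cN cD sNH sHD nHN.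
have [m lem cH] := pgrp_sub_card _ _ _ _ pr cD sHD.
have p1 := prime_gt1 pr.
have dNH := cardSg sNH; rewrite cN cH in dNH.
apply/eqP; rewrite eqEcard sHD cD cH leq_pexp2l ?prime_gt0 //.
case: m lem cH dNH => [|[|[|m]]] //= _ cH.
- by rewrite expn0 dvdn1 => /eqP pe; rewrite pe in p1.
- move=> _; case/negP: nHN.
  have eNH : (N :==: H)&&true by rewrite eqEcard sNH cH cN expn1 leqnn.
  by case/andP: eNH => /eqP <- _.
Qed.

Lemma small_normal_central p (G H : {group gT}) : prime p -> p.-group G ->
  H \subset G -> G \subset 'N(H) -> #|H| %| p -> H \subset 'Z(G).
Proof.
move=> pr pG sHG nHG dHp.
have [->|ntH] := eqVneq H 1%G; first exact: sub1G.
have cH : #|H| = p.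
  by apply/(prime_nt_dvdP pr) => //; rewrite -trivg_card1.
have prop := nil_comm_properl (pgroup_nil pG) sHG ntH
  (introT subsetIP (conj (subxx G) nHG)).
have := proper_card prop; rewrite cH => lt.
have := cardSg (proper_sub prop); rewrite cH.
case/(dvdn_pfactor _ 1 pr) => [[|[|m]]] //=.
  move=> _; rewrite expn0 => /eqP; rewrite -trivg_card1 => /eqP /commG1P cHG.
  by rewrite subsetI sHG.
move=> _ e; rewrite e in lt; by rewrite ltnn in lt.
Qed.

Lemma pcommE (x y : gT) : pcomm y x = [~ y^-1, x^-1].
Proof. by rewrite /pcomm /commg /conjg !invgK !mulgA. Qed.

Lemma commE_pcomm (x y : gT) : [~ x, y] = (pcomm y^-1 x) ^ x.
Proof. by rewrite /pcomm /commg /conjg invgK !mulgA mulgKV. Qed.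

End Aux.
Arguments pgrp_sub_card {gT p n H D}.
Arguments card_between {gT p N H D}.
Arguments small_normal_central {gT p G H}.

Theorem lemma3p4 (gT : finGroupType) (p : nat) (G : {group gT}) :
  prime p -> p.-group G ->
  #|G^`(1) :&: 'Z(G)| = p -> #|G^`(1)| = (p ^ 2)%N ->
  Zstar G :&: 'Z('C_G(G^`(1))) = G^`(1) * 'Z(G).
Proof.
move=> pr pG cN cD.
have sDG : G^`(1) \subset G := der_sub 1 G.
have nDG : G \subset 'N(G^`(1)) := normal_norm (der_normal 1 G).
have nZG : G \subset 'N('Z(G)) := normal_norm (center_normal G).
have sZG : 'Z(G) \subset G := center_sub G.
have abD : abelian G^`(1) := card_p2group_abelian pr cD.
have cenZ : forall z y, z \in 'Z(G) -> y \in G -> commute z y.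
  by move=> z y /centerP [_ h] /h.
have sRD : [~: G^`(1), G] \subset G^`(1) by rewrite commg_subl.
have sRZ : [~: G^`(1), G] \subset 'Z(G).
  apply: (small_normal_central pr pG).
  - exact: subset_trans sRD sDG.
  - by rewrite commg_normr.
  have [m lem cM] := pgrp_sub_card pr cD sRD.
  have ntD : G^`(1) :!=: 1 by rewrite trivg_card1 cD; case: (p) pr => [|[|q]].
  have prop := nil_comm_properl (pgroup_nil pG) sDG ntD
    (introT subsetIP (conj (subxx G) nDG)).
  have := proper_card prop; rewrite cM cD ltn_exp2l ?prime_gt1 // => lt.
  move: lem lt; case: m {cM prop} => [|[|m]] _ lt.
  - by rewrite expn0 dvd1n.
  - by rewrite expn1.
  - by [].

have sRN : [~: G^`(1), G] \subset G^`(1) :&: 'Z(G) by rewrite subsetI sRD.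
have DZC : forall d, d \in G^`(1) -> d \in 'Z('C_G(G^`(1))).
  move=> d Dd; apply/centerP; split.
    by rewrite in_setI (subsetP sDG) //= (subsetP abD).
  move=> t; rewrite in_setI => /andP [_ /centP ct].
  by apply: esym; apply: ct.
have ZZC : forall z, z \in 'Z(G) -> z \in 'Z('C_G(G^`(1))).
  move=> z Zz; apply/centerP; split.
    rewrite in_setI (subsetP sZG) //=; apply/centP => e De.
    exact: cenZ (subsetP sDG e De).
  by move=> t; rewrite in_setI => /andP [Gt _]; apply: cenZ.
apply/setP => x; apply/idP/idP; last first.
  case/mulsgP => d z Dd Zz ->.
  rewrite in_setI; apply/andP; split; last by apply: groupM; [apply: DZC | apply: ZZC].
  rewrite inE groupM ?(subsetP sDG d Dd) ?(subsetP sZG z Zz) //=.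
  apply/forall_inP => y Gy.
  rewrite pcommE invMg commgMJ.
  have /commgP/eqP -> : commute y^-1 z^-1.
    by apply: esym; apply: cenZ; rewrite ?groupV.
  rewrite conj1g mulg1; apply: (subsetP sRZ).
  by rewrite commGC mem_commg ?groupV.
case/setIP; rewrite inE => /andP [Gx /forall_inP hx0] xZC.
have hx : forall y, y \in G -> [~ x, y] \in 'Z(G).
  move=> y Gy; rewrite commE_pcomm memJ_norm ?(subsetP nZG) //.
  by apply: hx0; rewrite groupV.
have [xZ | nxZ] := boolP (x \in 'Z(G)).
  by rewrite -[x]mul1g mem_mulg.
have [y0 Gy0 ncx] : exists2 y0, y0 \in G & [~ x, y0] != 1.
  case: (pickP (fun y => (y \in G) && ([~ x, y] != 1))) => [y /andP [Gy ny] | none].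
    by exists y.
  case/negP: nxZ; apply/centerP; split => // y Gy.
  by apply/commgP; move: (none y); rewrite Gy /= => /negbFE.
have ny0C : y0 \notin 'C_G(G^`(1)).
  apply: contra ncx => y0C; apply/commgP.
  by case/centerP: xZC => _; apply.
have [g Dg ncg] : exists2 g, g \in G^`(1) & [~ g, y0] != 1.
  case: (pickP (fun g => (g \in G^`(1)) && ([~ g, y0] != 1))) => [g /andP [Dg ng] | none].
    by exists g.
  case/negP: ny0C; rewrite in_setI Gy0 /=; apply/centP => g Dg.
  by apply/esym/commgP; move: (none g); rewrite Dg /= => /negbFE.
have Gg := subsetP sDG g Dg.
have cN' : forall y, y \in G -> [~ g, y] \in G^`(1) :&: 'Z(G).
  by move=> y Gy; apply: (subsetP sRN); rewrite mem_commg.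
set c := [~ g, y0] in ncg.
have Nc : c \in G^`(1) :&: 'Z(G) := cN' y0 Gy0.
have Zc : c \in 'Z(G) by case/setIP: Nc.
have oc : #|<[c]>| = p.
  apply/(prime_nt_dvdP pr).
    by rewrite -/(order c) order_eq1.
  by rewrite -cN cardSg // cycle_subG.
have NcycleC : forall n, n \in G^`(1) :&: 'Z(G) -> exists k, n = c ^+ k.
  move=> n Nn; apply/cycleP.
  suff -> : <[c]> = G^`(1) :&: 'Z(G) by [].
  by apply/eqP; rewrite eqEcard cycle_subG Nc /= cN oc leqnn.
have tC : forall t, t \in G -> [~ g, t] = 1 -> t \in 'C_G(G^`(1)).
  move=> t Gt gt.
  have HD : 'C_(G^`(1))[t] = G^`(1).
    apply: (card_between pr cN cD).
    - rewrite subsetI subsetIl /=; apply/subsetP => n /setIP [_ Zn].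
      by apply/cent1P; apply: cenZ.
    - exact: subsetIl.
    - apply/negP => /subsetP /(_ g).
      rewrite in_setI Dg /=.
      have -> : g \in 'C[t] by apply/cent1P/commgP; rewrite gt.
      move=> /(_ isT) /setIP [_ Zg]; case/negP: ncg.
      by apply/commgP; apply: cenZ.
  by rewrite in_setI Gt -sub_cent1 -HD subsetIr.
have Dx : [~ x, y0] \in G^`(1) by rewrite derg1 mem_commg.
have [k ck] := NcycleC _ (introT setIP (conj Dx (hx y0 Gy0))).
have cgc : commute g c by apply: esym; apply: cenZ.
have gkc : [~ g ^+ k, y0] = c ^+ k := commXg k cgc.
set w := x * (g ^+ k)^-1.
have xw : x = w * g ^+ k by rewrite /w mulgKV.
have wy0 : commute w y0.
  apply/commgP; move/eqP: ck; rewrite {1}xw commMgJ gkc.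
  by rewrite -{2}(mul1g (c ^+ k)) (inj_eq (mulIg _)) conjg_eq1.
have gkZC : g ^+ k \in 'Z('C_G(G^`(1))) by rewrite groupX // DZC.
have wZC : w \in 'Z('C_G(G^`(1))) by rewrite groupM ?groupV.
have Gw : w \in G by rewrite groupM ?groupV ?groupX.
have wZ : w \in 'Z(G).
  apply/centerP; split => // y Gy.
  have [j cj] := NcycleC _ (cN' y Gy).
  set t := y * (y0 ^+ j)^-1.
  have yt : y = t * y0 ^+ j by rewrite /t mulgKV.
  have Gt : t \in G by rewrite groupM ?groupV ?groupX.
  have cyc : commute y0 c by apply: esym; apply: cenZ.
  have gt1 : [~ g, t] = 1.
    move/eqP: cj; rewrite {1}yt commgMJ (commgX j cyc).
    by rewrite -{2}(mulg1 (c ^+ j)) (inj_eq (mulgI _)) conjg_eq1 => /eqP.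
  have tCC := tC t Gt gt1.
  rewrite yt; apply: commuteM.
  - by case/centerP: wZC => _; apply.
  - exact: commuteX.
rewrite xw.
have -> : w * g ^+ k = g ^+ k * w by apply: cenZ; rewrite ?groupX.
by rewrite mem_mulg ?groupX.
Qed.
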